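(* Let $\mathcal{A}\subset[\mathbb{N}]^{<\infty}$ be nonempty and hereditary, let $P\subset\mathbb{N}$ be infinite and assume $\alpha_0=\mathbb{I}(\mathcal{A},P)<\omega_1$. Then there are an approximating family $(B_n(\alpha))_{n\in\mathbb{N},\alpha\text{ countable limit}}$, defining a transfinite family $(\mathcal{G}_\alpha)_{\alpha<\omega_1}$, and an infinite $L\subset P$ such that $$\mathcal{G}_{\alpha_0}^L\subset\mathcal{A}\cap[L]^{<\infty}\subset\mathcal{G}_{\alpha_0}\cap[L]^{<\infty}.$$
   Context: An approximating family assigns to each countable limit ordinal $\alpha$ finite sets $B_n(\alpha)\subset[0,\alpha)$, $n\in\mathbb{N}$, with $B_n(\alpha)\subset B_{n+1}(\alpha)$ and $\lim_n\max B_n(\alpha)=\alpha$. The transfinite family it defines: $\mathcal{G}_0=\{\emptyset\}$; $\mathcal{G}_{\beta+1}=\{\{n\}\cup E:n\in\mathbb{N},E\in\mathcal{G}_\beta\}\cup\{\emptyset\}$; for limit $\alpha$, $\mathcal{G}_\alpha=\{\emptyset\}\cup\{E\ne\emptyset:E\in\bigcup_{\beta\in B_{\min E}(\alpha)}\mathcal{G}_\beta\}$. For $L=\{l_1<l_2<\dots\}$, $\mathcal{G}^L=\{\{l_i:i\in E\}:E\in\mathcal{G}\}$. Fix any transfinite family $(\mathcal{F}_\alpha)$; a hereditary $\mathcal{A}$ is $\alpha$-large on an infinite $P$ if every infinite $M\subset P$ contains an infinite $N$ with $\mathcal{F}_\alpha^N\subset\mathcal{A}$ (this is independent of the transfinite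 family), and $\mathbb{I}(\mathcal{A},P)=\sup\{\alpha<\omega_1:\mathcal{A}\text{ is }\alpha\text{-large on }P\}$. Hereditary = closed under subsets; $[L]^{<\infty}$ = finite subsets of $L$. *)

(* Defs.v *)
From Stdlib Require List.
From mathcomp Require Import all_boot finmap.
Set Implicit Arguments. Unset Strict Implicit. Unset Printing Implicit Defensive.
Local Open Scope fset_scope.

(* (O, lt) is a strict well-order which is uncountable but all of whose proper
   initial segments are countable: any such structure is order-isomorphic to
   omega_1, so elements of O are exactly the countable ordinals. *)
Definition is_omega1 (O : Type) (lt : O -> O -> Prop) : Prop :=
  (forall a, ~ lt a a) /\
  (forall a b c, lt a b -> lt b c -> lt a c) /\
  (forall a b, lt a b \/ a = b \/ lt b a) /\
  well_founded lt /\
  (forall a : O, exists f : nat -> O, forall b, lt b a -> exists n, f n = b) /\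
  ~ (exists f : nat -> O, forall b, exists n, f n = b).

Section Ordinals.
Variables (O : Type) (lt : O -> O -> Prop).

Definition ole (a b : O) : Prop := lt a b \/ a = b.

Definition is_zero (a : O) : Prop := forall b, ~ lt b a.

Definition is_succ_of (a b : O) : Prop := lt b a /\ forall c, lt b c -> ole a c.

Definition is_limit (a : O) : Prop :=
  (exists b, lt b a) /\ (forall b, lt b a -> exists c, lt b c /\ lt c a).

(* Approximating family: for each limit alpha and n, a finite set B n alpha
   (a list) of ordinals < alpha, increasing in n, with max B_n(alpha) -> alpha.
   (Since max B_n(alpha) < alpha and is nondecreasing in n, the convergence
   amounts to: every gamma < alpha is exceeded by some element of some B_n.) *)
Definition approximating_family (B : nat -> O -> seq O) : Prop :=
  forall a, is_limit a ->
    [/\ (forall n b, List.In b (B n a) -> lt b a),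
        (forall n b, List.In b (B n a) -> List.In b (B n.+1 a))
      & (forall g, lt g a -> exists n b, List.In b (B n a) /\ lt g b)].

(* G is the transfinite family defined by B (characterized by its
   transfinite-recursive equations, which determine it uniquely). *)
Definition transfinite_family_of (B : nat -> O -> seq O)
    (G : O -> {fset nat} -> Prop) : Prop :=
  forall a,
    [/\ (is_zero a -> forall E, G a E <-> E = fset0),
        (forall b, is_succ_of a b -> forall E,
           G a E <-> (E = fset0 \/ exists n E', G b E' /\ E = n |` E'))
      & (is_limit a -> forall E,
           G a E <-> (E = fset0 \/
             exists n b, [/\ n \in E, (forall m, m \in E -> n <= m),
                             List.In b (B n a) & G b E]))].

End Ordinals.

Definition hereditary (A : {fset nat} -> Prop) : Prop :=
  forall E F, F `<=` E -> A E -> A F.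

Definition infinite_set (P : nat -> Prop) : Prop :=
  forall n, exists m, n <= m /\ P m.

Definition strictly_incr (f : nat -> nat) : Prop :=
  forall i j, i < j -> f i < f j.

(* F^N for N = {f 0 < f 1 < ...} : the image of E under the enumeration f *)
Definition spread (f : nat -> nat) (E : {fset nat}) : {fset nat} :=
  [fset f i | i in E].

Definition large_on (O : Type) (F : O -> {fset nat} -> Prop)
    (A : {fset nat} -> Prop) (a : O) (P : nat -> Prop) : Prop :=
  forall M : nat -> Prop, (forall m, M m -> P m) -> infinite_set M ->
    exists g, strictly_incr g /\ (forall i, M (g i)) /\
      (forall E, F a E -> A (spread g E)).

(* a0 = I(A,P) = sup {alpha < omega_1 : A alpha-large on P}, and it is < omega_1
   (i.e. the supremum exists as an element of O). *)
Definition is_index (O : Type) (lt : O -> O -> Prop) (F : O -> {fset nat} -> Prop)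
    (A : {fset nat} -> Prop) (P : nat -> Prop) (a0 : O) : Prop :=
  (forall a, large_on F A a P -> ole lt a a0) /\
  (forall b, (forall a, large_on F A a P -> ole lt a b) -> ole lt a0 b).

(* Main.v *)
Require Import Defs.
From mathcomp Require Import all_boot finmap zify.
From Stdlib Require Import Classical ClassicalEpsilon FunctionalExtensionality.
Set Implicit Arguments. Unset Strict Implicit. Unset Printing Implicit Defensive.

Local Open Scope fset_scope.

Lemma spread0 f : spread f fset0 = fset0.
Proof. exact: imfset0. Qed.
Lemma spreadU1 f n E : spread f (n |` E) = f n |` spread f E.
Proof. exact: imfsetU1. Qed.
Lemma spread_comp f g E : spread (fun x => f (g x)) E = spread f (spread g E).
Proof. exact: (imfset_comp _ g f). Qed.
Lemma in_spread f E m : (m \in spread f E) <-> exists2 x, x \in E & m = f x.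
Proof. split; [move/imfsetP => [x /= Hx ->]; by exists x | move=> [x Hx ->]; exact: in_imfset]. Qed.
Lemma spread_ext f g E : (forall x, x \in E -> f x = g x) -> spread f E = spread g E.
Proof. move=> H; apply: eq_in_imfset => x /= Hx; exact: H. Qed.
Lemma spread_mem f E x : x \in E -> f x \in spread f E.
Proof. move=> Hx; apply/in_spread; by exists x. Qed.

Lemma incr_ge f : strictly_incr f -> forall x, x <= f x.
Proof.
move=> Hf; elim=> [|x IH] //; have := Hf x x.+1 (ltnSn x); lia.
Qed.
Lemma incr_le f : strictly_incr f -> forall x y, x <= y -> f x <= f y.
Proof. move=> Hf x y; rewrite leq_eqVlt => /orP[/eqP->//|/Hf]; apply: ltnW. Qed.
Lemma incr_lt_inv f : strictly_incr f -> forall x y, f x < f y -> x < y.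
Proof. move=> Hf x y H; rewrite ltnNge; apply/negP => /(incr_le Hf); lia. Qed.
Lemma incr_inj f : strictly_incr f -> forall x y, f x = f y -> x = y.
Proof.
move=> Hf x y H; case: (ltngtP x y) => // /Hf; rewrite H; lia.
Qed.
Lemma incr_comp f g : strictly_incr f -> strictly_incr g -> strictly_incr (fun x => f (g x)).
Proof. move=> Hf Hg x y /Hg /Hf //. Qed.
Lemma incr_id : strictly_incr id.
Proof. by []. Qed.
Lemma incr_step f : (forall x, f x < f x.+1) -> strictly_incr f.
Proof.
move=> H x y; elim: y => // y IH; rewrite ltnS leq_eqVlt => /orP[/eqP->//|/IH]; have := H y; lia.
Qed.

Lemma minP (E : {fset nat}) : E != fset0 -> exists n, n \in E /\ forall m, m \in E -> n <= m.
Proof.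
move=> /fset0Pn Hex.
have Hex' : exists n, (fun n => n \in E) n by [].
exists (ex_minn Hex'); case: ex_minnP => m Hm Hmin; split=> //.
Qed.

Lemma in_U1 (n m : nat) E : (m \in n |` E) = (m == n) || (m \in E).
Proof. by rewrite !inE. Qed.

Local Open Scope fset_scope.

Section Ord.
Variables (O : Type) (lt : O -> O -> Prop).
Hypothesis HO : is_omega1 lt.

Lemma lt_irr a : ~ lt a a.
Proof. by case: HO => H _; apply: H. Qed.
Lemma lt_trans a b c : lt a b -> lt b c -> lt a c.
Proof. by case: HO => _ [H _]; apply: H. Qed.
Lemma lt_tri a b : lt a b \/ a = b \/ lt b a.
Proof. by case: HO => _ [_ [H _]]; apply: H. Qed.
Lemma lt_wf : well_founded lt.
Proof. by case: HO => _ [_ [_ [H _]]]. Qed.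
Lemma lt_asym a b : lt a b -> ~ lt b a.
Proof. move=> H1 H2; exact: (lt_irr (lt_trans H1 H2)). Qed.

Lemma exists_gt a : exists c, lt a c.
Proof.
apply: NNPP => Hn.
case: HO => _ [_ [_ [_ [Hc Hu]]]].
case: (Hc a) => f Hf; apply: Hu.
exists (fun n => if n is k.+1 then f k else a) => b.
case: (lt_tri b a) => [/Hf [n <-]|[->|Hab]]; first by exists n.+1.
  by exists 0.
by exfalso; apply: Hn; exists b.
Qed.

Lemma min_elt (S : O -> Prop) c : S c -> exists m, S m /\ forall d, S d -> ~ lt d m.
Proof.
elim/(well_founded_ind lt_wf): c => c IH Sc.
case: (classic (exists d, S d /\ lt d c)) => [[d [Sd Hdc]]|Hn].
  exact: IH Hdc Sd.
exists c; split=> // d Sd Hdc; apply: Hn; by exists d.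
Qed.

Lemma exists_succ a : exists s, is_succ_of lt s a.
Proof.
case: (exists_gt a) => c Hc.
case: (min_elt (S := fun x => lt a x) Hc) => m [Ham Hmin].
exists m; split=> // d Had.
case: (lt_tri m d) => [H|[H|H]]; [by left|by right|].
by exfalso; apply: (Hmin d).
Qed.

Definition osucc a := proj1_sig (constructive_indefinite_description _ (exists_succ a)).
Lemma osuccP a : is_succ_of lt (osucc a) a.
Proof. exact: (proj2_sig (constructive_indefinite_description _ (exists_succ a))). Qed.
Lemma lt_osucc a : lt a (osucc a).
Proof. by case: (osuccP a). Qed.

Lemma succ_unique s s' b : is_succ_of lt s b -> is_succ_of lt s' b -> s = s'.
Proof.
move=> [H1 H2] [H1' H2'].
case: (H2 _ H1') => // Hss'; case: (H2' _ H1) => // Hs's.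
by case: (lt_asym Hss' Hs's).
Qed.
Lemma pred_unique a b b' : is_succ_of lt a b -> is_succ_of lt a b' -> b = b'.
Proof.
move=> [H1 H2] [H1' H2'].
case: (lt_tri b b') => [H|[//|H]].
  case: (H2 _ H) => [H3|H3]; first by case: (lt_asym H1' H3).
  by subst; case: (lt_irr H1').
case: (H2' _ H) => [H3|H3]; first by case: (lt_asym H1 H3).
by subst; case: (lt_irr H1).
Qed.
Lemma succ_not_limit a b : is_succ_of lt a b -> ~ is_limit lt a.
Proof.
move=> [H1 H2] [_ Hl]; case: (Hl _ H1) => c [Hbc Hca].
by case: (H2 _ Hbc) => [/(lt_asym Hca)|Hac] //; subst; move/lt_irr: Hca.
Qed.
Lemma zero_not_limit a : is_zero lt a -> ~ is_limit lt a.
Proof. by move=> Hz [[b Hb] _]; apply: (Hz b). Qed.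
Lemma zero_not_succ a b : is_zero lt a -> ~ is_succ_of lt a b.
Proof. by move=> Hz [Hb _]; apply: (Hz b). Qed.

Lemma classify a : is_zero lt a \/ (exists b, is_succ_of lt a b) \/ is_limit lt a.
Proof.
case: (classic (exists b, lt b a)) => [Hex|Hn]; last first.
  by left => b Hb; apply: Hn; exists b.
case: (classic (exists b, is_succ_of lt a b)) => [H|Hns]; first by right; left.
right; right; split=> // b Hb.
have [Hb1 Hb2] := osuccP b.
case: (Hb2 _ Hb) => Hsa; first by exists (osucc b).
by exfalso; apply: Hns; exists b; rewrite -Hsa; exact: osuccP.
Qed.

Lemma limit_osucc_lt a c : is_limit lt a -> lt c a -> lt (osucc c) a.
Proof.
move=> Hl Hca; have [H1 H2] := osuccP c.
case: (H2 _ Hca) => // Heq.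
by exfalso; apply: (succ_not_limit (b := c) _ Hl); rewrite -Heq; exact: osuccP.
Qed.

Inductive Gind (B : nat -> O -> seq O) : O -> {fset nat} -> Prop :=
| G0 a : Gind B a fset0
| Gs a b n E : is_succ_of lt a b -> Gind B b E -> Gind B a (n |` E)
| Gl a b n E : is_limit lt a -> n \in E -> (forall m, m \in E -> n <= m) ->
    List.In b (B n a) -> Gind B b E -> Gind B a E.
Arguments Gs {B a b n E}.
Arguments Gl {B a b n E}.
Arguments G0 {B a}.

Section GB.
Variable B : nat -> O -> seq O.
Hypothesis HB : approximating_family lt B.

Lemma Bmono a n m b : is_limit lt a -> n <= m -> List.In b (B n a) -> List.In b (B m a).
Proof.
move=> Hl; case: (HB Hl) => _ Hinc _.
elim: m => [|m IH]; first by rewrite leqn0 => /eqP->.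
rewrite leq_eqVlt => /orP[/eqP->//|]; rewrite ltnS => /IH H /H; exact: Hinc.
Qed.

Lemma Bbound a n b : is_limit lt a -> List.In b (B n a) -> lt b a.
Proof. by move=> Hl; case: (HB Hl) => H _ _; apply: H. Qed.

Lemma Gind_spread u a E : strictly_incr u -> Gind B a E -> Gind B a (spread u E).
Proof.
move=> Hu; elim=> {a E} [a|a b n E Hs _ IH|a b n E Hl Hn Hmin Hb _ IH].
- rewrite spread0; exact: G0.
- rewrite spreadU1; exact: Gs Hs IH.
- apply: (Gl (b := b) (n := u n)) => //.
  + exact: spread_mem.
  + move=> m /in_spread [x Hx ->]; apply: incr_le => //; exact: Hmin.
  + apply: Bmono Hb => //; exact: incr_ge.
Qed.

Lemma Gind_lift a b E : is_succ_of lt a b -> Gind B b E -> Gind B a E.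
Proof.
move=> Hs HE; case: (fset_0Vmem E) => [->|[x Hx]]; first exact: G0.
have -> : E = x |` E by apply/fsetP => z; rewrite !inE; case: eqP => // ->; rewrite Hx.
exact: Gs Hs HE.
Qed.

Lemma Gind_her a E : Gind B a E -> forall F, F `<=` E -> Gind B a F.
Proof.
elim=> {a E} [a|a b n E Hs _ IH|a b n E Hl Hn Hmin Hb _ IH] F HF.
- by move: HF; rewrite fsubset0 => /eqP->; exact: G0.
- case HnF: (n \in F).
  + rewrite -(fsetD1K HnF); apply: (Gs Hs); apply: IH.
    apply/fsubsetP => z; rewrite in_fsetD1 => /andP[Hzn HzF].
    by move/fsubsetP: HF => /(_ _ HzF); rewrite in_U1 (negbTE Hzn).
  + apply: (Gind_lift Hs); apply: IH; apply/fsubsetP => z HzF.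
    move/fsubsetP: HF => /(_ _ HzF); rewrite in_U1 => /orP[/eqP Hz|//].
    by subst; rewrite HzF in HnF.
- case: (fset_0Vmem F) => [->|[x Hx]]; first exact: G0.
  have /minP [n' [Hn' Hmin']] : F != fset0 by apply/fset0Pn; exists x.
  apply: (Gl (b := b) (n := n')) => //; last exact: IH.
  apply: Bmono Hb => //; apply: Hmin; by move/fsubsetP: HF; apply.
Qed.

Lemma Gind_exch a E x y : Gind B a E -> x \in E -> y \notin E -> x < y ->
  Gind B a (y |` (E `\ x)).
Proof.
move=> HE; elim: HE x y => {a E} [a|a b n E Hs HE IH|a b n E Hl Hn Hmin Hb HE IH] x y.
- by rewrite inE.
- rewrite in_U1 => Hx; rewrite in_U1 negb_or => /andP[Hyn HyE] Hxy.
  case: (eqVneq x n) => [Hxn|Hxn].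
  + subst x.
    have -> : (n |` E) `\ n = E `\ n.
      by apply/fsetP => z; rewrite !inE; case: eqP.
    apply: (Gs Hs); apply: (Gind_her HE); exact: fsubD1set.
  + have {}Hx : x \in E by case/orP: Hx => // /eqP Hx'; move: Hxn; rewrite Hx' eqxx.
    have -> : y |` ((n |` E) `\ x) = n |` (y |` (E `\ x)).
      apply/fsetP => z; rewrite !inE.
      case Ez: (z == n); case Ey: (z == y); case Ex: (z == x); case Ein: (z \in E) => //=;
      move/eqP: Ez => Ez; move/eqP: Ex => Ex; subst; by rewrite eqxx in Hxn.
    apply: (Gs Hs); exact: IH.
- move=> Hx HyE Hxy.
  have Hne : y |` (E `\ x) != fset0 by apply/fset0Pn; exists y; rewrite in_U1 eqxx.
  case/minP: Hne => n' [Hn' Hmin'].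
  apply: (Gl (b := b) (n := n')) => //; last exact: IH.
  apply: Bmono Hb => //.
  move: Hn'; rewrite in_U1 => /orP[/eqP->|]; first by have := Hmin _ Hx; lia.
  by rewrite in_fsetD1 => /andP[_ /Hmin].
Qed.

Lemma Gind_succ_inv a b E : is_succ_of lt a b -> Gind B a E ->
  E = fset0 \/ exists n E', E = n |` E' /\ Gind B b E'.
Proof.
move=> Hs HE; inversion HE; [by left| |].
- right; exists n, E0; split=> //.
  by rewrite (pred_unique Hs H).
- by case: (succ_not_limit Hs H).
Qed.

Lemma Gind_lim_inv a E : is_limit lt a -> Gind B a E -> E != fset0 ->
  exists n b, [/\ n \in E, (forall m, m \in E -> n <= m), List.In b (B n a) & Gind B b E].
Proof.
move=> Hl HE; inversion HE; [by rewrite eqxx| |].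
- by case: (succ_not_limit H Hl).
- by move=> _; exists n, b.
Qed.

Lemma Gind_zero_inv a E : is_zero lt a -> Gind B a E -> E = fset0.
Proof.
move=> Hz HE; inversion HE => //.
- by case: (zero_not_succ Hz H).
- by case: (zero_not_limit Hz H).
Qed.

Lemma Gind_nf a b E m : is_succ_of lt a b -> Gind B a E -> m \in E ->
  (forall k, k \in E -> m <= k) -> Gind B b (E `\ m).
Proof.
move=> Hs HE Hm Hmin.
case: (Gind_succ_inv Hs HE) => [HE0|[n [E' [HEq HE']]]]; first by rewrite HE0 inE in Hm.
subst E.
case: (classic ((n == m) || (n \in E'))) => [Hc|Hc].
- apply: (Gind_her HE'); apply/fsubsetP => z; rewrite in_fsetD1 in_U1 => /andP[Hzm /orP[/eqP Hzn|//]].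
  subst z; case/orP: Hc => [/eqP Hnm|//]; by rewrite Hnm eqxx in Hzm.
- move/negP: Hc; rewrite negb_or => /andP[Hnm HnE'].
  have HmE' : m \in E' by move: Hm; rewrite in_U1 eq_sym (negbTE Hnm).
  have Hmn : m < n by have := Hmin n (fsetU11 _ _); move/eqP: Hnm; lia.
  have -> : (n |` E') `\ m = n |` (E' `\ m).
    apply/fsetP => z; rewrite !inE.
    case Ez: (z == n); case Em: (z == m) => //=;
    move/eqP: Ez => Ez; move/eqP: Em => Em; subst; move/eqP: Hnm; lia.
  exact: Gind_exch.
Qed.

Lemma Gind_AI a b : lt b a -> exists k, forall E, Gind B b E ->
  (forall m, m \in E -> k <= m) -> Gind B a E.
Proof.
elim/(well_founded_ind lt_wf): a b => a IH b Hba.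
case: (classify a) => [Hz|[[c Hs]|Hl]].
- by case: (Hz b).
- have [Hca Hc] := Hs.
  case: (lt_tri b c) => [Hbc|[Hbc|Hcb]].
  + case: (IH c Hca b Hbc) => k Hk; exists k => E HE HEk.
    exact: (Gind_lift Hs (Hk E HE HEk)).
  + subst; exists 0 => E HE _; exact: Gind_lift Hs HE.
  + by case: (Hc b Hcb) => [/(lt_asym Hba)|H] //; subst; case: (lt_irr Hba).
- case: (HB Hl) => _ _ Hcof.
  case: (Hcof b Hba) => m0 [b' [Hb' Hbb']].
  have Hb'a := Bbound Hl Hb'.
  case: (IH b' Hb'a b Hbb') => k Hk.
  exists (maxn m0 k) => E HE HEk.
  case: (fset_0Vmem E) => [->|[x Hx]]; first exact: G0.
  have /minP [n [Hn Hmin]] : E != fset0 by apply/fset0Pn; exists x.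
  apply: (Gl (b := b') (n := n)) => //.
  + apply: Bmono Hb' => //; have := HEk _ Hn; lia.
  + apply: Hk => // m Hm; have := HEk _ Hm; lia.
Qed.


Lemma tf_Gind G : transfinite_family_of lt B G -> forall a E, G a E <-> Gind B a E.
Proof.
move=> HG a; elim/(well_founded_ind lt_wf): a => a IH E.
case: (HG a) => Hz Hsc Hlim.
case: (classify a) => [Hza|[[b Hs]|Hl]].
- rewrite (Hz Hza); split=> [->|H]; first exact: G0.
  exact: Gind_zero_inv Hza H.
- rewrite (Hsc _ Hs); split.
  + case=> [->|[n [E' [HE' ->]]]]; first exact: G0.
    apply: (Gs Hs); apply/IH => //; by case: Hs.
  + move=> H; case: (Gind_succ_inv Hs H) => [->|[n [E' [-> HE']]]]; first by left.
    right; exists n, E'; split=> //; apply/IH => //; by case: Hs.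
- rewrite (Hlim Hl); split.
  + case=> [->|[n [b [Hn Hmin Hb HGb]]]]; first exact: G0.
    apply: (Gl (b := b) (n := n)) => //; apply/IH => //; exact: Bbound Hb.
  + move=> H; case: (fset_0Vmem E) => [->|[x Hx]]; first by left.
    have /(Gind_lim_inv Hl H) [n [b [Hn Hmin Hb HGb]]] : E != fset0 by apply/fset0Pn; exists x.
    right; exists n, b; split=> //; apply/IH => //; exact: Bbound Hb.
Qed.

End GB.
End Ord.
Arguments Gs {O lt B a b n E}.
Arguments Gl {O lt B a b n E}.
Arguments G0 {O lt B a}.

Local Close Scope fset_scope.

Definition fixlt (i : nat) (u : nat -> nat) := forall x, x < i -> u x = x.

Lemma fixlt_comp i u v : fixlt i u -> fixlt i v -> fixlt i (fun x => u (v x)).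
Proof. by move=> Hu Hv x Hx; rewrite Hv // Hu. Qed.
Lemma fixlt_id i : fixlt i id.
Proof. by []. Qed.
Lemma fixlt_mono i j u : i <= j -> fixlt j u -> fixlt i u.
Proof. move=> Hij Hu x Hx; apply: Hu; lia. Qed.

Definition pad (i : nat) (t : nat -> nat) := fun x => if x < i then x else i + t x.
Lemma pad_incr i t : strictly_incr t -> strictly_incr (pad i t).
Proof.
move=> Ht; apply: incr_step => x; rewrite /pad; case: (ltnP x i) => Hx; case: (ltnP x.+1 i) => Hx1 //.

- have := incr_ge Ht x.+1; lia.
- lia.
- have := Ht x x.+1 (ltnSn x); lia.
Qed.
Lemma pad_fix i t : fixlt i (pad i t).
Proof. by move=> x Hx; rewrite /pad Hx. Qed.
Lemma pad_ge i t x : i <= x -> pad i t x = i + t x.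
Proof. by rewrite /pad; case: ltnP => //; lia. Qed.

Lemma factor g h : strictly_incr g -> strictly_incr h -> (forall x, exists y, h x = g y) ->
  exists w, strictly_incr w /\ h = (fun x => g (w x)).
Proof.
move=> Hg Hh H.
pose w x := proj1_sig (constructive_indefinite_description _ (H x)).
have Hw : forall x, h x = g (w x) by move=> x; exact: (proj2_sig (constructive_indefinite_description _ (H x))).
exists w; split; last by apply: functional_extensionality.
move=> x y Hxy; apply: (incr_lt_inv Hg); rewrite -!Hw; exact: Hh.
Qed.

Lemma factor_fix g h i w : strictly_incr g -> h = (fun x => g (w x)) -> (forall x, x < i -> h x = g x) -> fixlt i w.
Proof. move=> Hg -> H x Hx; apply: (incr_inj Hg); exact: H. Qed.

Section Fusion.
Variable R : nat -> (nat -> nat) -> Prop.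
Hypothesis H1 : forall i g, strictly_incr g -> exists u, [/\ strictly_incr u, fixlt i u & R i (fun x => g (u x))].
Hypothesis H2 : forall i g u, strictly_incr g -> strictly_incr u -> fixlt i.+1 u -> R i g -> R i (fun x => g (u x)).

Definition iseq := {g : nat -> nat | strictly_incr g}.

Definition fstep (i : nat) (s : iseq) : iseq :=
  let e := constructive_indefinite_description _ (H1 i (proj2_sig s)) in
  exist _ (fun x => proj1_sig s (proj1_sig e x))
    (incr_comp (proj2_sig s) (let: And3 h _ _ := proj2_sig e in h)).

Lemma fstepP i s : exists u, [/\ strictly_incr u, fixlt i u,
  proj1_sig (fstep i s) = (fun x => proj1_sig s (u x)) & R i (proj1_sig (fstep i s))].
Proof.
rewrite /fstep; set e := constructive_indefinite_description _ _.
case: (proj2_sig e) => Hu Hf HR; by exists (proj1_sig e).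
Qed.

Variable g0 : iseq.
Fixpoint gs (i : nat) : iseq := if i is j.+1 then fstep j (gs j) else g0.

Lemma gs_rel i j : i <= j -> exists U, [/\ strictly_incr U, fixlt i U & proj1_sig (gs j) = (fun x => proj1_sig (gs i) (U x))].
Proof.
move=> Hij; elim: j Hij => [|j IH]; first by rewrite leqn0 => /eqP->; exists id; split; [exact: incr_id|exact: fixlt_id|].
rewrite leq_eqVlt => /orP[/eqP<-|]; first by exists id; split; [exact: incr_id|exact: fixlt_id|].
rewrite ltnS => Hij'; case: (IH Hij') => U [HU HUf HUe].
case: (fstepP j (gs j)) => u [Hu Huf Hue _].
exists (fun x => U (u x)); split.
- exact: incr_comp.
- apply: fixlt_comp => //; exact: fixlt_mono Hij' Huf.
- by change (proj1_sig (fstep j (gs j)) = (fun x => proj1_sig (gs i) (U (u x)))); rewrite Hue HUe.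
Qed.

Definition dg (x : nat) := proj1_sig (gs x.+1) x.

Lemma dg_in i : exists w, [/\ strictly_incr w, fixlt i w & dg = (fun x => proj1_sig (gs i) (w x))].
Proof.
have Hgi := proj2_sig (gs i).
have Hd : strictly_incr dg.
  apply: incr_step => x; rewrite /dg.
  case: (fstepP x.+1 (gs x.+1)) => u [Hu Huf Hue _].
  change (proj1_sig (gs x.+1) x < proj1_sig (fstep x.+1 (gs x.+1)) x.+1).
  rewrite Hue /=; apply: (proj2_sig (gs x.+1)); have := incr_ge Hu x.+1; lia.
have Hex : forall x, exists y, dg x = proj1_sig (gs i) y.
  move=> x; rewrite /dg; case: (leqP i x.+1) => Hix.
  - case: (gs_rel Hix) => U [_ _ ->]; by exists (U x).
  - case: (gs_rel (ltnW Hix)) => U [_ HUf ->]; exists x; rewrite HUf //.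
case: (factor Hgi Hd Hex) => w [Hw Hwe].
exists w; split=> //; apply: (factor_fix Hgi Hwe) => x Hx.
rewrite /dg; have Hix : x.+1 <= i by [].
case: (gs_rel Hix) => U [_ HUf ->]; by rewrite HUf.
Qed.

Lemma fusion_main : exists w, strictly_incr w /\ forall i, R i (fun x => proj1_sig g0 (w x)).
Proof.
case: (dg_in 0) => W [HW _ HWe].
exists W; split=> // i.
rewrite -[fun x => _]HWe.
case: (dg_in i.+1) => w [Hw Hwf ->].
apply: H2 => //; first exact: (proj2_sig (gs i.+1)).
case: (fstepP i (gs i)) => u [_ _ _ HR] //.
Qed.
End Fusion.

Lemma fusion (R : nat -> (nat -> nat) -> Prop) :
  (forall i g, strictly_incr g -> exists u, [/\ strictly_incr u, fixlt i u & R i (fun x => g (u x))]) ->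
  (forall i g u, strictly_incr g -> strictly_incr u -> fixlt i.+1 u -> R i g -> R i (fun x => g (u x))) ->
  forall g0, strictly_incr g0 -> exists w, strictly_incr w /\ forall i, R i (fun x => g0 (w x)).
Proof.
move=> H1 H2 g0 Hg0; exact: (fusion_main H1 H2 (exist _ g0 Hg0)).
Qed.

Lemma joint (T : Type) (P : T -> (nat -> nat) -> Prop) i (bs : list T) :
  (forall b, List.In b bs -> forall g, strictly_incr g -> exists u, [/\ strictly_incr u, fixlt i u & P b (fun x => g (u x))]) ->
  (forall b, List.In b bs -> forall g u, strictly_incr g -> strictly_incr u -> fixlt i u -> P b g -> P b (fun x => g (u x))) ->
  forall g, strictly_incr g -> exists u, [/\ strictly_incr u, fixlt i u & forall b, List.In b bs -> P b (fun x => g (u x))].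
Proof.
elim: bs => [|b bs IH] Hach Hpres g Hg; first by exists id; split; [exact: incr_id|exact: fixlt_id|].
case: (IH (fun b' Hb' => Hach b' (or_intror Hb')) (fun b' Hb' => Hpres b' (or_intror Hb')) g Hg) => u1 [Hu1 Hf1 HP1].
case: (Hach b (or_introl erefl) _ (incr_comp Hg Hu1)) => u2 [Hu2 Hf2 HP2].
exists (fun x => u1 (u2 x)); split.
- exact: incr_comp.
- exact: fixlt_comp.
- move=> b' [<-|Hb'] //.
  exact: (Hpres b' (or_intror Hb') _ u2 (incr_comp Hg Hu1) Hu2 Hf2 (HP1 b' Hb')).
Qed.

Lemma enum_inf (M : nat -> Prop) : infinite_set M -> exists h, strictly_incr h /\ forall i, M (h i).
Proof.
move=> HM.
pose nx n := proj1_sig (constructive_indefinite_description _ (HM n)).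
have Hnx : forall n, n <= nx n /\ M (nx n) by move=> n; exact: (proj2_sig (constructive_indefinite_description _ (HM n))).
pose h := fix h i := if i is j.+1 then nx (h j).+1 else nx 0.
exists h; split.
- have Hs : forall x, h x < h x.+1.
    move=> x; rewrite [h x.+1]/=; have [H _] := Hnx (h x).+1; lia.
  exact: incr_step Hs.
- by move=> [|i]; [exact: (proj2 (Hnx 0)) | exact: (proj2 (Hnx _))].
Qed.

Lemma enum_inf_ix (Q : nat -> Prop) : (forall n, exists m, n <= m /\ Q m) ->
  exists s, strictly_incr s /\ forall k, Q (s k).
Proof. exact: enum_inf. Qed.

Local Close Scope fset_scope.

Section CL.
Variables (O : Type) (lt : O -> O -> Prop).
Hypothesis HO : is_omega1 lt.
Variables (B B' : nat -> O -> seq O).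
Hypotheses (HB : approximating_family lt B) (HB' : approximating_family lt B').

Lemma spread_ge (u : nat -> nat) i (Z : {fset nat}) : strictly_incr u ->
  (forall z, z \in Z -> i <= z) -> forall z, z \in spread u Z -> i <= z.
Proof. move=> Hu HZ z /in_spread [x Hx ->]; have := incr_ge Hu x; have := HZ x Hx; lia. Qed.

Lemma F_lift_limit a b' m0 (Z : {fset nat}) : is_limit lt a -> List.In b' (B' m0 a) ->
  Gind lt B' b' Z -> (forall z, z \in Z -> m0 <= z) -> Gind lt B' a Z.
Proof.
move=> Hl Hb' HZ Hge.
case: (fset_0Vmem Z) => [->|[x Hx]]; first exact: G0.
have /minP [n [Hn Hmin]] : Z != fset0 by apply/fset0Pn; exists x.
apply: (Gl (b := b') (n := n)) => //; apply: (Bmono HB' Hl _ Hb'); exact: Hge.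
Qed.

Lemma CL a : forall s, strictly_incr s -> exists u, strictly_incr u /\
  forall E, Gind lt B a E -> Gind lt B' a (spread (fun x => s (u x)) E).
Proof.
elim/(well_founded_ind (lt_wf HO)): a => a IH s Hs.
case: (classify HO a) => [Hz|[[b Hsb]|Hl]].
- exists id; split=> [|E HE]; first exact: incr_id.
  by rewrite (Gind_zero_inv Hz HE) spread0; exact: G0.
- have [Hba _] := Hsb.
  case: (IH b Hba s Hs) => u [Hu Hcl]; exists u; split=> // E HE.
  case: (Gind_succ_inv HO Hsb HE) => [->|[n [E' [-> HE']]]]; first by rewrite spread0; exact: G0.
  rewrite spreadU1; apply: (Gs Hsb); exact: Hcl.
- pose R i (t : nat -> nat) := forall b, List.In b (B i a) -> forall Z, Gind lt B b Z ->
    (forall z, z \in Z -> i <= z) -> Gind lt B' a (spread t Z).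
  have H2 : forall i g u, strictly_incr g -> strictly_incr u -> fixlt i u -> R i g -> R i (fun x => g (u x)).
    move=> i g u Hg Hu Hf HR b Hb Z HZ Hge; rewrite spread_comp; apply: HR Hb _ _ _.
    + exact (Gind_spread HB Hu HZ).
    + exact: spread_ge.
  have H1 : forall i g, strictly_incr g -> exists u, [/\ strictly_incr u, fixlt i u & R i (fun x => g (u x))].
    move=> i g Hg.
    apply: (joint (P := fun b t => forall Z, Gind lt B b Z -> (forall z, z \in Z -> i <= z) ->
      Gind lt B' a (spread t Z))) => //; last first.
      by move=> b _ g' u Hg' Hu Hf HP Z HZ Hge; rewrite spread_comp; apply: HP;
        [exact (Gind_spread HB Hu HZ) | exact: spread_ge].
    move=> b Hb g' Hg'.
    have Hba := Bbound HB Hl Hb.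
    case: (HB' Hl) => _ _ Hcof.
    case: (Hcof b Hba) => m0 [b' [Hb' Hbb']].
    case: (Gind_AI HO HB' Hbb') => k Hk.
    pose K := i + m0 + k.
    case: (IH b Hba (fun y => g' (i + K + y))) => [x y Hxy|u' [Hu' Hcl]].
      apply: Hg'; lia.
    exists (pad i (fun x => K + u' x)); split.
    + apply: pad_incr => x y Hxy; have := Hu' _ _ Hxy; lia.
    + exact: pad_fix.
    + move=> Z HZ Hge.
      have -> : spread (fun x => g' (pad i (fun x0 => K + u' x0) x)) Z =
                spread (fun x => g' (i + K + u' x)) Z.
        apply: spread_ext => x Hx; rewrite pad_ge ?Hge //; congr g'; lia.
      have HF := Hcl Z HZ.
      have Hbig : forall z, z \in spread (fun x => g' (i + K + u' x)) Z -> K <= z.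
        move=> z /in_spread [x _ ->]; have := incr_ge Hg' (i + K + u' x); lia.
      apply: (F_lift_limit (b' := b') (m0 := m0)) => //.
      * apply: Hk => // z /Hbig; lia.
      * move=> z /Hbig; lia.
  case: (fusion H1 (fun i g u Hg Hu Hf => H2 i g u Hg Hu (fixlt_mono (leqnSn i) Hf)) Hs) => w [Hw HR].
  exists w; split=> // E HE.
  case: (fset_0Vmem E) => [->|[x Hx]]; first by rewrite spread0; exact: G0.
  have /(Gind_lim_inv HO Hl HE) [n [b [Hn Hmin Hb HGb]]] : E != fset0 by apply/fset0Pn; exists x.
  exact: (HR n b Hb E HGb Hmin).
Qed.
End CL.

Section Att.
Variables (O : Type) (lt : O -> O -> Prop).
Hypothesis HO : is_omega1 lt.
Variables (B' : nat -> O -> seq O).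
Hypothesis (HB' : approximating_family lt B').
Variables (A' : {fset nat} -> Prop) (h : nat -> nat).

Definition Lg b := forall t, strictly_incr t -> exists u, strictly_incr u /\
  forall E, Gind lt B' b E -> A' (spread (fun x => h (t (u x))) E).

Lemma attain g : is_limit lt g -> (forall b, lt b g -> Lg b) -> Lg g.
Proof.
move=> Hl HLg t Ht.
pose R i (r : nat -> nat) := forall b, List.In b (B' i g) -> forall Z, Gind lt B' b Z ->
    (forall z, z \in Z -> i <= z) -> A' (spread (fun x => h (r x)) Z).
have H1 : forall i r, strictly_incr r -> exists u, [/\ strictly_incr u, fixlt i u & R i (fun x => r (u x))].
  move=> i r Hr.
  apply: (joint (P := fun b r' => forall Z, Gind lt B' b Z -> (forall z, z \in Z -> i <= z) ->
      A' (spread (fun x => h (r' x)) Z))) => //; last first.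
    move=> b _ g' u Hg' Hu Hf HP Z HZ Hge.
    rewrite (spread_comp (fun x => h (g' x)) u); apply: HP.
    + exact (Gind_spread HB' Hu HZ).
    + exact: spread_ge.
  move=> b Hb g' Hg'.
  have Hbg := Bbound HB' Hl Hb.
  case: (HLg b Hbg (fun y => g' (i + y))) => [x y Hxy|u' [Hu' Hcl]].
    apply: Hg'; lia.
  exists (pad i u'); split.
  - exact: pad_incr.
  - exact: pad_fix.
  - move=> Z HZ Hge.
    have -> : spread (fun x => h (g' (pad i u' x))) Z = spread (fun x => h (g' (i + u' x))) Z.
      apply: spread_ext => x Hx; rewrite pad_ge ?Hge //.
    exact: Hcl.
have H2 : forall i r u, strictly_incr r -> strictly_incr u -> fixlt i.+1 u -> R i r -> R i (fun x => r (u x)).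
  move=> i r u Hr Hu Hf HR b Hb Z HZ Hge.
  rewrite (spread_comp (fun x => h (r x)) u); apply: HR Hb _ _ _.
  + exact (Gind_spread HB' Hu HZ).
  + exact: spread_ge.
case: (fusion H1 H2 Ht) => w [Hw HR].
exists w; split=> // E HE.
case: (fset_0Vmem E) => [->|[x Hx]].
  case: Hl => [[b Hb] _]; case: (HLg b Hb id incr_id) => u [_ Hu].
  by have := Hu fset0 G0; rewrite !spread0.
have /(Gind_lim_inv HO Hl HE) [n [b [Hn Hmin Hb HGb]]] : E != fset0 by apply/fset0Pn; exists x.
exact: (HR n b Hb E HGb Hmin).
Qed.
End Att.

Local Open Scope fset_scope.

Section Upper.
Variables (O : Type) (lt : O -> O -> Prop).
Hypothesis HO : is_omega1 lt.
Variables (B' : nat -> O -> seq O).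
Hypothesis (HB' : approximating_family lt B').

Definition HNL (A : {fset nat} -> Prop) a (h : nat -> nat) :=
  forall t, strictly_incr t -> ~ (forall E, Gind lt B' a E -> A (spread (fun x => h (t x)) E)).

Definition ext (A : {fset nat} -> Prop) (n : nat) := fun E => A (n |` E).

Lemma ext_her A n : hereditary A -> hereditary (ext A n).
Proof. move=> HA E F HFE; rewrite /ext; apply: HA; exact: fsetUS. Qed.

Lemma A_empty A E : hereditary A -> A E -> A fset0.
Proof. move=> HA HE; apply: (HA E) => //; exact: fsub0set. Qed.

Section Comb.
Variables (g : O) (A : {fset nat} -> Prop) (h : nat -> nat).
Hypotheses (HA : hereditary A) (Hh : strictly_incr h) (HN : HNL A (osucc HO g) h).
Variable TB : ({fset nat} -> Prop) -> (nat -> Prop) -> Prop.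
Hypothesis TBmono : forall a (X Y : nat -> Prop), (forall m, Y m -> X m) -> TB a X -> TB a Y.
Hypothesis TBdich : forall a, hereditary a -> forall r, strictly_incr r ->
  (exists t, strictly_incr t /\ TB a (fun m => exists x, r (t x) = m)) \/
  (exists t, strictly_incr t /\ forall Z, Gind lt B' g Z -> a (spread (fun x => r (t x)) Z)).

Lemma comb : exists w, strictly_incr w /\ exists s, strictly_incr s /\
  forall k, TB (ext A (h (w (s k)))) (fun m => exists x, s k < x /\ h (w x) = m).
Proof.
pose R i (r : nat -> nat) :=
  TB (ext A (h (r i))) (fun m => exists x, i < x /\ h (r x) = m) \/
  (forall Z, Gind lt B' g Z -> (forall z, z \in Z -> i < z) -> ext A (h (r i)) (spread (fun x => h (r x)) Z)).
have H1 : forall i r, strictly_incr r -> exists u, [/\ strictly_incr u, fixlt i u & R i (fun x => r (u x))].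
  move=> i r Hr.
  have Hr' : strictly_incr (fun y => h (r (i.+1 + y)%N)).
    move=> x y Hxy; apply: Hh; apply: Hr; lia.
  have Hu0 : forall t, strictly_incr t -> [/\ strictly_incr (pad i.+1 t), fixlt i (pad i.+1 t) & pad i.+1 t i = i].
    move=> t Ht; split; [exact: pad_incr | move=> x Hx; apply: pad_fix; lia | apply: pad_fix; lia].
  case: (TBdich (@ext_her A (h (r i)) HA) Hr') => [[t [Ht HTB]]|[t [Ht HZ]]].
  - case: (Hu0 t Ht) => Hu Hf Hi; exists (pad i.+1 t); split=> //; left; rewrite Hi.
    apply: TBmono HTB => m [x [Hx <-]]; exists x; by rewrite pad_ge.
  - case: (Hu0 t Ht) => Hu Hf Hi; exists (pad i.+1 t); split=> //; right; rewrite Hi => Z HZg Hge.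
    have -> : spread (fun x => h (r (pad i.+1 t x))) Z = spread (fun x => h (r (i.+1 + t x)%N)) Z.
      by apply: spread_ext => x Hx; rewrite pad_ge // Hge.
    exact: HZ.
have H2 : forall i r u, strictly_incr r -> strictly_incr u -> fixlt i.+1 u -> R i r -> R i (fun x => r (u x)).
  move=> i r u Hr Hu Hf; rewrite /R (Hf i (ltnSn i)) => -[HTB|HZ]; [left|right].
  - apply: TBmono HTB => m [x [Hx <-]]; exists (u x); split=> //.
    by rewrite -(Hf i (ltnSn i)); apply: Hu.
  - move=> Z HZg Hge; rewrite (spread_comp (fun x => h (r x)) u); apply: HZ.
    + exact (Gind_spread HB' Hu HZg).
    + move=> z /in_spread [x Hx ->]; have := incr_ge Hu x; have := Hge x Hx; lia.
case: (fusion H1 H2 incr_id) => w [Hw HR].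
exists w; split=> //.
case: (classic (forall n, exists i, n <= i /\ TB (ext A (h (w i))) (fun m => exists x, i < x /\ h (w x) = m))) => [Hinf|Hfin].
- case: (enum_inf Hinf) => s [Hs HTs]; by exists s.
- exfalso.
  have [n Hn] : exists n, forall i, n <= i -> forall Z, Gind lt B' g Z -> (forall z, z \in Z -> i < z) ->
      ext A (h (w i)) (spread (fun x => h (w x)) Z).
    apply: NNPP => Hc; apply: Hfin => n; apply: NNPP => Hc2; apply: Hc; exists n => i Hi.
    case: (HR i) => // HTB; exfalso; apply: Hc2; by exists i.
  apply: (HN (t := fun x => w (n + x)%N)); first by move=> x y Hxy; apply: Hw; lia.
  move=> E HE.
  have Hsn : strictly_incr (fun x => (n + x)%N) by move=> x y; lia.
  rewrite (spread_comp (fun x => h (w x)) (fun x => (n + x)%N)).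
  set E' := spread _ E.
  have HE' : Gind lt B' (osucc HO g) E' := Gind_spread HB' Hsn HE.
  have HE'n : forall z, z \in E' -> n <= z by move=> z /in_spread [x _ ->]; lia.
  case: (fset_0Vmem E') => [->|[x0 Hx0]].
    rewrite spread0; apply: (A_empty HA (E := [fset h (w n)] `|` fset0)).
    have := Hn n (leqnn n) fset0 G0; rewrite spread0; apply => z; by rewrite inE.
  have /minP [m [Hm Hmin]] : E' != fset0 by apply/fset0Pn; exists x0.
  have Hnf := Gind_nf HO HB' (osuccP HO g) HE' Hm Hmin.
  rewrite -(fsetD1K Hm) spreadU1.
  apply: (Hn m (HE'n m Hm)) => // z; rewrite in_fsetD1 => /andP[Hzm /Hmin]; move/eqP: Hzm; lia.
Qed.
End Comb.

Definition reqok (req : O -> nat -> seq O) := forall l m c, List.In c (req l m) -> lt c l.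
Definition reqin (req : O -> nat -> seq O) (B : nat -> O -> seq O) (E : {fset nat}) :=
  forall l m c, m \in E -> List.In c (req l m) -> List.In c (B m l).
Definition UPPER g := forall A, hereditary A -> forall h, strictly_incr h -> HNL A (osucc HO g) h ->
  exists w, strictly_incr w /\ exists req, reqok req /\
  forall B E, A E -> (forall m, m \in E -> exists x, h (w x) = m) -> reqin req B E -> Gind lt B g E.

Lemma decomp (A : {fset nat} -> Prop) (h w s : nat -> nat) E :
  strictly_incr h -> strictly_incr w -> strictly_incr s -> A E ->
  (forall m, m \in E -> exists x, h (w (s x)) = m) ->
  E != fset0 -> exists k, let e := h (w (s k)) in
  [/\ e \in E, ext A e (E `\ e), (forall m, m \in E `\ e -> exists x, s k < x /\ h (w x) = m),
      (forall m, m \in E `\ e -> e < m) & E = e |` (E `\ e)].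
Proof.
move=> Hh Hw Hs HAE Hrng /minP [e [He Hmin]].
have Hinc : strictly_incr (fun k => h (w (s k))) by move=> x y Hxy; apply: Hh; apply: Hw; apply: Hs.
case: (Hrng e He) => k Hk; exists k => /=; rewrite Hk.
have HD : E = e |` (E `\ e) by rewrite fsetD1K.
have Hgt : forall m, m \in E `\ e -> e < m.
  move=> m; rewrite in_fsetD1 => /andP[Hme /Hmin]; move/eqP: Hme; lia.
split=> //.
- by rewrite /ext -HD.
- move=> m Hm; have HmE : m \in E by move: Hm; rewrite in_fsetD1 => /andP[].
  case: (Hrng m HmE) => k' Hk'; exists (s k'); split; last done.
  apply: Hs; apply: (incr_lt_inv Hinc); rewrite Hk Hk'; exact: Hgt.
Qed.

Lemma req_comb (e : nat -> nat) (rq ex : nat -> O -> nat -> seq O) :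
  (forall k, reqok (rq k)) -> (forall k l m c, List.In c (ex k l m) -> lt c l) ->
  let req l m := List.flat_map (fun k => (if e k < m then rq k l m else [::]) ++ ex k l m) (List.seq 0 m.+1) in
  [/\ reqok req, (forall k l m c, k <= m -> e k < m -> List.In c (rq k l m) -> List.In c (req l m))
    & (forall k l m c, k <= m -> List.In c (ex k l m) -> List.In c (req l m))].
Proof.
move=> Hrq Hex req; split.
- move=> l m c; rewrite /req List.in_flat_map => -[k [_ /List.in_app_iff [|/Hex //]]].
  by case: ifP => // _ /Hrq.
- move=> k l m c Hk He Hc; rewrite /req List.in_flat_map; exists k; split.
  + apply/List.in_seq; lia.
  + by apply/List.in_app_iff; left; rewrite He.
- move=> k l m c Hk Hc; rewrite /req List.in_flat_map; exists k; split.
  + apply/List.in_seq; lia.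
  + by apply/List.in_app_iff; right.
Qed.

Lemma upper_zero g : is_zero lt g -> UPPER g.
Proof.
move=> Hz A HA h Hh HN.
pose TB (a : {fset nat} -> Prop) (X : nat -> Prop) := forall E, a E -> (forall m, m \in E -> X m) -> False.
have TBmono : forall a (X Y : nat -> Prop), (forall m, Y m -> X m) -> TB a X -> TB a Y.
  move=> a X Y HYX HT E HaE HEY; apply: (HT E HaE) => m /HEY; exact: HYX.
have TBdich : forall a, hereditary a -> forall r, strictly_incr r ->
  (exists t, strictly_incr t /\ TB a (fun m => exists x, r (t x) = m)) \/
  (exists t, strictly_incr t /\ forall Z, Gind lt B' g Z -> a (spread (fun x => r (t x)) Z)).
  move=> a Ha r Hr; case: (classic (a fset0)) => H0.
  - right; exists id; split=> [|Z HZ]; first exact: incr_id.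
    by rewrite (Gind_zero_inv Hz HZ) spread0.
  - left; exists id; split=> [|E HaE _]; first exact: incr_id.
    by apply: H0; exact: A_empty Ha HaE.
case: (comb HA Hh HN TBmono TBdich) => w [Hw [s [Hs HT]]].
exists (fun k => w (s k)); split; first exact: incr_comp.
exists (fun _ _ => [::]); split=> // B E HAE Hrng _.
case: (fset_0Vmem E) => [->|[x0 Hx0]]; first exact: G0.
have Hne : E != fset0 by apply/fset0Pn; exists x0.
case: (decomp Hh Hw Hs HAE Hrng Hne) => k /= [He Hext Hr Hgt HD].
by case: (HT k _ Hext Hr).
Qed.

Lemma upper_succ g b : is_succ_of lt g b -> UPPER b -> UPPER g.
Proof.
move=> Hsb IH A HA h Hh HN.
have Hgb : g = osucc HO b := succ_unique HO Hsb (osuccP HO b).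
pose TB (a : {fset nat} -> Prop) (X : nat -> Prop) := exists req, reqok req /\
  forall B E, a E -> (forall m, m \in E -> X m) -> reqin req B E -> Gind lt B b E.
have TBmono : forall a (X Y : nat -> Prop), (forall m, Y m -> X m) -> TB a X -> TB a Y.
  move=> a X Y HYX [req [Hok HT]]; exists req; split=> // B E HaE HEY; apply: HT => // m /HEY; exact: HYX.
have TBdich : forall a, hereditary a -> forall r, strictly_incr r ->
  (exists t, strictly_incr t /\ TB a (fun m => exists x, r (t x) = m)) \/
  (exists t, strictly_incr t /\ forall Z, Gind lt B' g Z -> a (spread (fun x => r (t x)) Z)).
  move=> a Ha r Hr.
  case: (classic (exists t, strictly_incr t /\ HNL a g (fun x => r (t x)))) => [[t [Ht HNa]]|Hno].
  - rewrite Hgb in HNa.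
    case: (IH a Ha _ (incr_comp Hr Ht) HNa) => w' [Hw' [req [Hok HT]]].
    left; exists (fun x => t (w' x)); split; first exact: incr_comp.
    exists req; split=> // B E HaE HEX; exact: HT.
  - right; apply: NNPP => Hc; apply: Hno; exists id; split; first exact: incr_id.
    move=> t Ht Hall; apply: Hc; exists t; split=> //.
case: (comb HA Hh HN TBmono TBdich) => w [Hw [s [Hs HT]]].
pose rq k := proj1_sig (constructive_indefinite_description _ (HT k)).
have Hrq : forall k, reqok (rq k) /\ forall B E, ext A (h (w (s k))) E ->
    (forall m, m \in E -> exists x, s k < x /\ h (w x) = m) -> reqin (rq k) B E -> Gind lt B b E.
  move=> k; exact: (proj2_sig (constructive_indefinite_description _ (HT k))).
case: (@req_comb (fun k => h (w (s k))) rq (fun _ _ _ => [::])) => //.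
  by move=> k; case: (Hrq k).
set req := fun l m => _ => Hok Hin1 _.
exists (fun k => w (s k)); split; first exact: incr_comp.
exists req; split=> // B E HAE Hrng Hreq.
case: (fset_0Vmem E) => [->|[x0 Hx0]]; first exact: G0.
have Hne : E != fset0 by apply/fset0Pn; exists x0.
case: (decomp Hh Hw Hs HAE Hrng Hne) => k /= [He Hext Hr Hgt HD].
rewrite HD; apply: (Gs Hsb); case: (Hrq k) => _ HTk; apply: HTk => // l m c Hm Hc.
have HmE : m \in E by move: Hm; rewrite in_fsetD1 => /andP[].
apply: (Hreq l m c HmE); apply: (Hin1 k) => //.
- have := Hgt m Hm; have := incr_ge (incr_comp Hh (incr_comp Hw Hs)) k; lia.
- exact: Hgt.
Qed.

Lemma upper_limit g : is_limit lt g -> (forall c, lt c g -> UPPER c) -> UPPER g.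
Proof.
move=> Hl IH A HA h Hh HN.
pose TB (a : {fset nat} -> Prop) (X : nat -> Prop) := exists c req, [/\ lt c g, reqok req &
  forall B E, a E -> (forall m, m \in E -> X m) -> reqin req B E -> Gind lt B c E].
have TBmono : forall a (X Y : nat -> Prop), (forall m, Y m -> X m) -> TB a X -> TB a Y.
  move=> a X Y HYX [c [req [Hc Hok HT]]]; exists c, req; split=> // B E HaE HEY; apply: HT => // m /HEY; exact: HYX.
have TBdich : forall a, hereditary a -> forall r, strictly_incr r ->
  (exists t, strictly_incr t /\ TB a (fun m => exists x, r (t x) = m)) \/
  (exists t, strictly_incr t /\ forall Z, Gind lt B' g Z -> a (spread (fun x => r (t x)) Z)).
  move=> a Ha r Hr.
  case: (classic (exists c, lt c g /\ exists t, strictly_incr t /\ HNL a (osucc HO c) (fun x => r (t x)))) =>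
    [[c [Hc [t [Ht HNa]]]]|Hno].
  - case: (IH c Hc a Ha _ (incr_comp Hr Ht) HNa) => w' [Hw' [req [Hok HT]]].
    left; exists (fun x => t (w' x)); split; first exact: incr_comp.
    exists c, req; split=> // B E HaE HEX; exact: HT.
  - right.
    have HLg : forall b, lt b g -> Lg lt B' a r b.
      move=> b Hb t Ht; apply: NNPP => Hc; apply: Hno; exists b; split=> //; exists t; split=> //.
      move=> u Hu Hall; apply: Hc; exists u; split=> // E HE; apply: Hall.
      exact: (Gind_lift (osuccP HO b) HE).
    case: (attain HO HB' Hl HLg incr_id) => u [Hu Hall]; by exists u.
case: (comb HA Hh HN TBmono TBdich) => w [Hw [s [Hs HT]]].
pose dat k := constructive_indefinite_description _ (HT k).
pose cc k := proj1_sig (dat k).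
have Hcc : forall k, exists req, [/\ lt (cc k) g, reqok req & forall B E, ext A (h (w (s k))) E ->
    (forall m, m \in E -> exists x, s k < x /\ h (w x) = m) -> reqin req B E -> Gind lt B (cc k) E].
  move=> k; exact: (proj2_sig (dat k)).
pose rq k := proj1_sig (constructive_indefinite_description _ (Hcc k)).
have Hrq : forall k, [/\ lt (cc k) g, reqok (rq k) & forall B E, ext A (h (w (s k))) E ->
    (forall m, m \in E -> exists x, s k < x /\ h (w x) = m) -> reqin (rq k) B E -> Gind lt B (cc k) E].
  move=> k; exact: (proj2_sig (constructive_indefinite_description _ (Hcc k))).
pose ex k l m := if (h (w (s k)) == m) then (if excluded_middle_informative (l = g) then [:: osucc HO (cc k)] else [::]) else [::].
case: (@req_comb (fun k => h (w (s k))) rq ex) => //.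
- by move=> k; case: (Hrq k).
- move=> k l m c; rewrite /ex; case: eqP => // _.
  case: (excluded_middle_informative (l = g)) => [Hlg|_] //; subst l; case=> [<-|//].
  apply: limit_osucc_lt => //; by case: (Hrq k).
set req := fun l m => _ => Hok Hin1 Hin2.
exists (fun k => w (s k)); split; first exact: incr_comp.
exists req; split=> // B E HAE Hrng Hreq.
case: (fset_0Vmem E) => [->|[x0 Hx0]]; first exact: G0.
have Hne : E != fset0 by apply/fset0Pn; exists x0.
have Hge := incr_ge (incr_comp Hh (incr_comp Hw Hs)).
case: (decomp Hh Hw Hs HAE Hrng Hne) => k /= [He Hext Hr Hgt HD].
have Hsub : Gind lt B (osucc HO (cc k)) E.
  rewrite HD; apply: (Gs (osuccP HO (cc k))); case: (Hrq k) => _ _ HTk; apply: HTk => // l m c Hm Hc.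
  have HmE : m \in E by move: Hm; rewrite in_fsetD1 => /andP[].
  apply: (Hreq l m c HmE); apply: (Hin1 k) => //.
  + have := Hgt m Hm; have := Hge k; lia.
  + exact: Hgt.
apply: (Gl (b := osucc HO (cc k)) (n := h (w (s k)))) => //.
- move=> m Hm; case: (eqVneq m (h (w (s k)))) => [->//|Hmk].
  have : m \in E `\ h (w (s k)) by rewrite in_fsetD1 Hmk.
  move/Hgt; lia.
- apply: (Hreq g _ _ He); apply: (Hin2 k _ _ _ (Hge k)).
  rewrite /ex eqxx; case: (excluded_middle_informative (g = g)) => //= _; by left.
Qed.

Lemma upper g : UPPER g.
Proof.
elim/(well_founded_ind (lt_wf HO)): g => g IH.
case: (classify HO g) => [Hz|[[b Hsb]|Hl]].
- exact: upper_zero.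
- apply: (upper_succ Hsb); apply: IH; by case: Hsb.
- exact: upper_limit.
Qed.
End Upper.

Local Open Scope fset_scope.

Section Final.
Variables (O : Type) (lt : O -> O -> Prop).
Hypothesis HO : is_omega1 lt.
Variables (Bfix : nat -> O -> seq O) (F : O -> {fset nat} -> Prop).
Hypotheses (HBfix : approximating_family lt Bfix) (HF : transfinite_family_of lt Bfix F).
Variables (A : {fset nat} -> Prop) (P : nat -> Prop).
Hypotheses (HAh : hereditary A) (HAne : exists E, A E).

Let HFeq := tf_Gind HO HBfix HF.

Lemma large_down a b : lt b a -> large_on F A a P -> large_on F A b P.
Proof.
move=> Hba HL M HMP HMi.
case: (Gind_AI HO HBfix Hba) => k Hk.
case: (HL M HMP HMi) => g [Hg [HgM HgA]].
exists (fun x => g (k + x)%N); split; first by move=> x y Hxy; apply: Hg; lia.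
split=> [i|E HE]; first exact: HgM.
have Hsk : strictly_incr (fun x => (k + x)%N) by move=> x y; lia.
rewrite (spread_comp g (fun x => (k + x)%N)); apply: HgA; apply/HFeq; apply: Hk.
- apply: (Gind_spread HBfix Hsk); exact/HFeq.
- move=> m /in_spread [x _ ->]; lia.
Qed.

Lemma large_Lg b h : large_on F A b P -> strictly_incr h -> (forall i, P (h i)) -> Lg lt Bfix A h b.
Proof.
move=> HL Hh HPh t Ht.
have Hht : strictly_incr (fun x => h (t x)) := incr_comp Hh Ht.
case: (HL (fun m => exists x, h (t x) = m)) => [m [x <-]|n|g [Hg [HgM HgA]]] //.
  by exists (h (t n)); split=> //; [exact: incr_ge Hht n | by exists n].
have HgM' : forall x, exists y, g x = h (t y) by move=> x; case: (HgM x) => y <-; by exists y.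
case: (factor Hht Hg HgM') => u [Hu Hgu].
exists u; split=> // E HE; rewrite -Hgu; apply: HgA; exact/HFeq.
Qed.

Lemma large_attained a0 : is_index lt F A P a0 -> large_on F A a0 P.
Proof.
case=> Hub Hlub.
have Hbelow : forall c, lt c a0 -> exists a, large_on F A a P /\ lt c a.
  move=> c Hc; apply: NNPP => Hn.
  have : ole lt a0 c.
    apply: Hlub => a Ha; case: (lt_tri HO a c) => [H|[H|H]]; [by left|by right|].
    by exfalso; apply: Hn; exists a.
  case=> [H|H]; [exact: (lt_asym HO H Hc) | subst; exact: (lt_irr HO Hc)].
case: (classify HO a0) => [Hz|[[c Hs]|Hl]].
- move=> M _ HMi; case: (enum_inf HMi) => g [Hg HgM]; exists g; do 2!split=> //.
  move=> E /HFeq HE; rewrite (Gind_zero_inv Hz HE) spread0.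
  by case: HAne => E0 HE0; exact: A_empty HAh HE0.
- case: (Hbelow c) => [|a [Ha Hca]]; first by case: Hs.
  case: (Hs) => _ /(_ a Hca) [Hlt|->] //.
  by case: (Hub a Ha) => [H|H]; [case: (lt_asym HO H Hlt)|subst; case: (lt_irr HO Hlt)].
- move=> M HMP HMi; case: (enum_inf HMi) => h0 [Hh0 Hh0M].
  have HP0 : forall i, P (h0 i) by move=> i; apply: HMP.
  have HLg : forall b, lt b a0 -> Lg lt Bfix A h0 b.
    move=> b Hb; case: (Hbelow b Hb) => a [Ha Hba].
    exact: (large_Lg (large_down Hba Ha) Hh0 HP0).
  case: (attain HO HBfix Hl HLg incr_id) => u [Hu HA0].
  exists (fun x => h0 (u x)); split; first exact: incr_comp.
  split=> // E /HFeq HE; exact: HA0.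
Qed.

Lemma main_sec (HP : infinite_set P) a0 : is_index lt F A P a0 ->
  exists B : nat -> O -> seq O, approximating_family lt B /\
  exists l : nat -> nat, strictly_incr l /\ (forall i, P (l i)) /\
    forall G : O -> {fset nat} -> Prop, transfinite_family_of lt B G ->
      (forall E, G a0 E -> A (spread l E)) /\
      (forall E, A E -> (forall n, n \in E -> exists i, l i = n) -> G a0 E).
Proof.
move=> Ha0.
have HL0 := large_attained Ha0.
have HnL : ~ large_on F A (osucc HO a0) P.
  move=> HL; case: (proj1 Ha0 _ HL) => [H|H].
  - exact: (lt_asym HO H (lt_osucc HO a0)).
  - by have := lt_osucc HO a0; rewrite H; apply: lt_irr.
have [M [HMP HMi HMn]] : exists M : nat -> Prop, [/\ forall m, M m -> P m, infinite_set M &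
    forall g, strictly_incr g -> (forall i, M (g i)) -> ~ (forall E, F (osucc HO a0) E -> A (spread g E))].
  apply: NNPP => Hc; apply: HnL => M HMP HMi; apply: NNPP => Hc2; apply: Hc.
  exists M; split=> // g Hg HgM HgA; apply: Hc2; exists g; split=> //.
case: (enum_inf HMi) => h [Hh HhM].
have HN : HNL lt Bfix A (osucc HO a0) h.
  move=> t Ht Hall; apply: (HMn _ (incr_comp Hh Ht)) => [i|E /HFeq]; [exact: HhM | exact: Hall].
case: (upper (HO := HO) HBfix HAh Hh HN) => w [Hw [req [Hok HUP]]].
pose fe (l : O) := proj1_sig (constructive_indefinite_description _ (proj1 (proj2 (proj2 (proj2 (proj2 HO)))) l)).
have Hfe : forall l b, lt b l -> exists n, fe l n = b.
  move=> l; exact: (proj2_sig (constructive_indefinite_description _ (proj1 (proj2 (proj2 (proj2 (proj2 HO)))) l))).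
pose enm (l : O) (m : nat) := List.flat_map (fun k => if excluded_middle_informative (lt (fe l k) l) then [:: fe l k] else [::]) (List.seq 0 m.+1).
pose B (m : nat) (l : O) := List.flat_map (fun m' => req l m') (List.seq 0 m.+1) ++ enm l m.
have HBin : forall l m c, List.In c (B m l) <-> (exists m', m' <= m /\ List.In c (req l m')) \/
    (exists k, k <= m /\ lt (fe l k) l /\ c = fe l k).
  move=> l m c; rewrite /B /enm List.in_app_iff !List.in_flat_map; split.
  - case=> [[m' [Hm' Hc]]|[k [Hk Hc]]].
    + left; exists m'; split=> //; move/List.in_seq: Hm'; lia.
    + right; exists k; move/List.in_seq: Hk => Hk.
      move: Hc; case: excluded_middle_informative => // Hlt [<-|//]; split=> //; lia.
  - case=> [[m' [Hm' Hc]]|[k [Hk [Hlt ->]]]].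
    + left; exists m'; split=> //; apply/List.in_seq; lia.
    + right; exists k; split; first by apply/List.in_seq; lia.
      by case: excluded_middle_informative => //; left.
have HB : approximating_family lt B.
  move=> l Hl; split.
  - move=> n b /HBin [[m' [_ /Hok //]]|[k [_ [Hlt ->]]]] //.
  - move=> n b /HBin [[m' [Hm' Hc]]|[k [Hk Hc]]]; apply/HBin; [left; exists m' | right; exists k]; split=> //; lia.
  - move=> g0 Hg0; case: Hl => _ /(_ g0 Hg0) [c [Hgc Hcl]].
    case: (Hfe l c Hcl) => k Hk; exists k, c; split=> //.
    apply/HBin; right; exists k; split=> //; by rewrite Hk.
have Hreqin : forall E, reqin req B E.
  move=> E l m c _ Hc; apply/HBin; left; by exists m.
exists B; split=> //.
pose M' := fun m => exists x, h (w x) = m.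
have Hhw : strictly_incr (fun x => h (w x)) := incr_comp Hh Hw.
case: (HL0 M') => [m [x <-]|n|g [Hg [HgM HgA]]]; first exact: HMP (HhM _).
  by exists (h (w n)); split; [exact: incr_ge Hhw n | exists n].
case: (CL HO HB HBfix a0 incr_id) => u [Hu HCL].
exists (fun x => g (u x)); split; first exact: incr_comp.
split.
  by move=> i; case: (HgM (u i)) => x <-; apply: HMP; apply: HhM.
move=> G HG; have HGeq := tf_Gind HO HB HG.
split.
- move=> E /HGeq HE; rewrite (spread_comp g u); apply: HgA; apply/HFeq; exact: HCL.
- move=> E HAE Hrng; apply/HGeq; apply: HUP => // m /Hrng [i <-].
  exact: HgM.
Qed.
End Final.

Theorem theorem4p1
  (O : Type) (lt : O -> O -> Prop) (HO : is_omega1 lt)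
  (Bfix : nat -> O -> seq O) (F : O -> {fset nat} -> Prop)
  (HBfix : approximating_family lt Bfix)
  (HF : transfinite_family_of lt Bfix F)
  (A : {fset nat} -> Prop) (HAne : exists E, A E) (HAh : hereditary A)
  (P : nat -> Prop) (HP : infinite_set P)
  (a0 : O) (Ha0 : is_index lt F A P a0) :
  exists B : nat -> O -> seq O, approximating_family lt B /\
  exists l : nat -> nat, strictly_incr l /\ (forall i, P (l i)) /\
    forall G : O -> {fset nat} -> Prop, transfinite_family_of lt B G ->
      (forall E, G a0 E -> A (spread l E)) /\
      (forall E, A E -> (forall n, n \in E -> exists i, l i = n) -> G a0 E).
Proof. exact: (main_sec HO HBfix HF HAh HAne HP Ha0). Qed.
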